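(* For every integer $m$, $G_{m-1}(\lambda)=\frac{\lambda}{1-\lambda}\,G_m'(\lambda)$ as formal power series in $\lambda$, where $G_m'$ denotes the formal derivative with respect to $\lambda$.
   Context: For an integer $m$ let $R_m(z)=\sum_{n\ge1} n^{n-m}\frac{z^n}{n!}$, a formal power series in $z$. Let $T(z)=\sum_{n\ge1}n^{n-1}\frac{z^n}{n!}$ (the tree function); it satisfies $T(z)=z e^{T(z)}$, so its compositional inverse is $z=\lambda e^{-\lambda}$. Define the formal power series $G_m(\lambda):=R_m(\lambda e^{-\lambda})$, so that $G_m(T(z))=R_m(z)$. *)

(* Defs.v *)
From mathcomp Require Import all_boot all_order all_algebra.
Set Implicit Arguments. Unset Strict Implicit. Unset Printing Implicit Defensive.
Import Order.TTheory GRing.Theory Num.Theory.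
Local Open Scope ring_scope.

(* formal power series: f n = coefficient of x^n *)
Definition fps := nat -> rat.

Definition fps_mul (f g : fps) : fps :=
  fun n => \sum_(i < n.+1) f i * g (n - i)%N.

Definition fps_one : fps := fun n => if n is 0%N then 1 else 0.

Fixpoint fps_pow (f : fps) (k : nat) : fps :=
  if k is k'.+1 then fps_mul f (fps_pow f k') else fps_one.

Definition fps_deriv (f : fps) : fps := fun n => n.+1%:R * f n.+1.

(* composition f(h) for h with zero constant term: since h^k has no terms of
   degree < k, the coefficient of x^n in sum_k f_k h^k is the finite sum below *)
Definition fps_comp (f h : fps) : fps :=
  fun n => \sum_(k < n.+1) f k * fps_pow h k n.

Definition Rser (m : int) : fps :=
  fun n => if n is 0%N then 0 else (n%:R : rat) ^ (n%:Z - m) / (n`!)%:R.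

(* lambda * e^{-lambda} = sum_{n>=1} (-1)^(n-1) lambda^n / (n-1)! *)
Definition lam_exp_neg_lam : fps :=
  fun n => if n is n'.+1 then (-1) ^+ n' / (n'`!)%:R else 0.

Definition Gser (m : int) : fps := fps_comp (Rser m) lam_exp_neg_lam.

Definition lam_over_one_minus_lam : fps :=
  fun n => if n is 0%N then 0 else 1.

(* Main.v *)
Require Import Defs.
From mathcomp Require Import all_boot all_order all_algebra.
From mathcomp Require Import ring lra zify.
From Stdlib Require Import FunctionalExtensionality.
Set Implicit Arguments. Unset Strict Implicit. Unset Printing Implicit Defensive.
Import Order.TTheory GRing.Theory Num.Theory.
Local Open Scope ring_scope.

Definition PP (N : nat) (f : fps) : {poly rat} := \poly_(i < N) f i.

Lemma coefPP N f i : (i < N)%N -> (PP N f)`_i = f i.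
Proof. by move=> H; rewrite /PP coef_poly H. Qed.

Lemma mul_coef N f g n : (n < N)%N -> fps_mul f g n = (PP N f * PP N g)`_n.
Proof.
move=> Hn; rewrite coefM /fps_mul; apply: eq_bigr => i _.
have Hi := ltn_ord i.
rewrite !coefPP //; lia.
Qed.

Lemma pow_coef N h k n : (n < N)%N -> fps_pow h k n = (PP N h ^+ k)`_n.
Proof.
elim: k n => [|k IH] n Hn /=.
  by rewrite expr0 coef1; case: n Hn.
rewrite exprS coefM /fps_mul; apply: eq_bigr => i _.
have Hi := ltn_ord i.
rewrite coefPP; last lia.
rewrite IH //; lia.
Qed.

Lemma pow_low h k j : h 0%N = 0 -> (j < k)%N -> fps_pow h k j = 0.
Proof.
move=> h0; elim: k j => [|k IH] j Hj //=.
rewrite /fps_mul big1 // => i _.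
case: (nat_of_ord i =P 0%N) => [->|ne]; first by rewrite h0 mul0r.
rewrite IH ?mulr0 //.
have Hi := ltn_ord i; lia.
Qed.

Lemma sum_ext (F : nat -> rat) a b : (a <= b)%N ->
  (forall k, (a <= k)%N -> F k = 0) ->
  \sum_(k < a) F k = \sum_(k < b) F k.
Proof.
move=> Hab HF; rewrite (big_ord_widen _ _ Hab) big_mkcond /=.
apply: eq_bigr => i _; case: ifP => // /negbT; rewrite -leqNgt => H.
by rewrite HF.
Qed.

Definition eqm M (p q : {poly rat}) := forall i, (i < M)%N -> p`_i = q`_i.

Lemma eqm_mul M p q r s : eqm M p q -> eqm M r s -> eqm M (p * r) (q * s).
Proof.
move=> H1 H2 j Hj; rewrite !coefM; apply: eq_bigr => i _.
have Hi := ltn_ord i.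
rewrite H1; last lia. rewrite H2 //; lia.
Qed.

Lemma eqm_deriv N f : eqm N.-1 (PP N f)^`() (PP N (fps_deriv f)).
Proof.
move=> i Hi; rewrite coef_deriv !coefPP; [|by case: N Hi => // N; rewrite ltnS => /ltnW|by case: N Hi => // N].
by rewrite /fps_deriv mulr_natl.
Qed.

Notation h := lam_exp_neg_lam.
Notation L := lam_over_one_minus_lam.

Lemma mulL g j : fps_mul L g j.+1 = \sum_(i < j.+1) g i.
Proof.
rewrite /fps_mul big_ord_recl /= mul0r add0r.
rewrite (reindex_inj rev_ord_inj) /=; apply: eq_bigr => i _.
rewrite /bump /= mul1r; congr g.
have Hi := ltn_ord i; lia.
Qed.

Lemma hstep j : h j.+1 = \sum_(i < j.+1) fps_deriv h i.
Proof.
elim: j => [|j IH].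
  by rewrite big_ord1 /fps_deriv /= mul1r.
rewrite big_ord_recr /= -IH /fps_deriv /h /=.
rewrite !factS !natrM exprS.
have f0 : (j`!)%:R != 0 :> rat by rewrite pnatr_eq0 -lt0n fact_gt0.
have f1 : (j.+1)%:R != 0 :> rat by rewrite pnatr_eq0.
have f2 : (j.+2)%:R != 0 :> rat by rewrite pnatr_eq0.
rewrite [(j.+2)%:R](_ : _ = (j.+1)%:R + 1); last by rewrite -natr1.
field; rewrite f0 /=; by rewrite addrC natr1.
Qed.

Lemma Lderiv j : fps_mul L (fps_deriv h) j = h j.
Proof.
case: j => [|j]; first by rewrite /fps_mul big_ord1 /= mul0r.
by rewrite mulL hstep.
Qed.

Lemma eqm_refl M p : eqm M p p. Proof. by []. Qed.
Lemma eqm_sym M p q : eqm M p q -> eqm M q p.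
Proof. by move=> H i Hi; rewrite H. Qed.
Lemma eqm_trans M p q r : eqm M p q -> eqm M q r -> eqm M p r.
Proof. by move=> H1 H2 i Hi; rewrite H1 // H2. Qed.
Lemma eqm_derivE M p q : eqm M.+1 p q -> eqm M p^`() q^`().
Proof. by move=> H i Hi; rewrite !coef_deriv H. Qed.

Lemma key k n : fps_mul L (fps_deriv (fps_pow h k)) n = k%:R * fps_pow h k n.
Proof.
rewrite (@mul_coef n.+2) //.
set p := PP n.+2 h.
have E0 : eqm n.+2 (PP n.+2 (fps_pow h k)) (p ^+ k).
  by move=> i Hi; rewrite coefPP // -pow_coef.
have E1 : eqm n.+1 (PP n.+2 L * PP n.+2 (fps_deriv (fps_pow h k)))
                   (PP n.+2 L * (p ^+ k)^`()).
  apply: eqm_mul; first exact: eqm_refl.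
  apply: (@eqm_trans _ _ (PP n.+2 (fps_pow h k))^`()).
    exact: (eqm_sym (@eqm_deriv n.+2 (fps_pow h k))).
  exact: eqm_derivE.
have E2 : eqm n.+1 (PP n.+2 L * p^`() * p ^+ k.-1) (p * p ^+ k.-1).
  apply: eqm_mul; last exact: eqm_refl.
  move=> j Hj.
  rewrite (eqm_mul (@eqm_refl n.+1 (PP n.+2 L)) (@eqm_deriv n.+2 h)) // -mul_coef; last lia.
  by rewrite Lderiv coefPP //; lia.
rewrite E1 // deriv_exp mulrnAr coefMn mulrA E2 //.
case: k {E0 E1 E2} => [|k] /=; first by rewrite mulr0n mul0r.
by rewrite -exprS mulr_natl -pow_coef.
Qed.

Lemma Rser_pred m k : Rser (m - 1) k = k%:R * Rser m k.
Proof.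
case: k => [|k] /=; first by rewrite mulr0.
have -> : (Posz k.+1 - (m - 1))%R = (Posz k.+1 - m) + 1 by ring.
rewrite exprzDr ?expr1z; last by rewrite unitfE pnatr_eq0.
ring.
Qed.

Theorem corollary1 (m : int) :
  Gser (m - 1) = fps_mul lam_over_one_minus_lam (fps_deriv (Gser m)).
Proof.
apply: functional_extensionality => n.
have P0 : h 0%N = 0 by [].
rewrite /Gser /fps_comp.
transitivity (\sum_(k < n.+2) Rser m k * (k%:R * fps_pow h k n)).
  rewrite -(@sum_ext (fun k => Rser m k * (k%:R * fps_pow h k n)) n.+1 n.+2) //; last first.
    by move=> k Hk; rewrite pow_low // !mulr0.
  by apply: eq_bigr => k _; rewrite Rser_pred mulrCA mulrA.
symmetry; rewrite /fps_mul.
transitivity (\sum_(i < n.+1) L i * \sum_(k < n.+2)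
     Rser m k * ((n - i).+1%:R * fps_pow h k (n - i).+1)).
  apply: eq_bigr => i _; rewrite /fps_deriv; congr (_ * _).
  rewrite mulr_sumr.
  rewrite (@sum_ext (fun k => (n - i).+1%:R * (Rser m k * fps_pow h k (n - i).+1)) (n - i).+2 n.+2).
  - by apply: eq_bigr => k _; rewrite mulrCA.
  - by rewrite ltnS ltnS leq_subr.
  - by move=> k Hk; rewrite pow_low // mulr0 mulr0.
under eq_bigr do rewrite mulr_sumr.
rewrite exchange_big /=; apply: eq_bigr => k _.
rewrite -key /fps_mul mulr_sumr; apply: eq_bigr => i _.
by rewrite /fps_deriv mulrCA.
Qed.
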